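(* Let $\mathcal{H}$ be a nonzero reproducing kernel Hilbert space of $\mathfrak{X}$-valued entire functions with $B(\mathfrak{X})$-valued reproducing kernel $K_\gamma(z)$. Then for any $\beta\in\mathbb{C}$, $$R_\beta\mathcal{H}_\beta\subseteq\mathcal{H}\quad\text{if and only if}\quad R_\beta\mathcal{H}_\beta=\mathcal{D}.$$ Moreover, if this condition holds for some $\beta\in\mathbb{C}$, then: (1) $R_\beta$ is a bounded linear operator from $\mathcal{H}_\beta$ to $\mathcal{H}$; (2) $\operatorname{rng}(\mathfrak{T}-\beta I)=\mathcal{H}_\beta$; (3) $\beta$ is a point of regular type for $\mathfrak{T}$.
   Context: $\mathfrak{X}$ is a complex separable Hilbert space. For $\beta\in\mathbb{C}$, $\mathcal{H}_\beta=\{f\in\mathcal{H}: f(\beta)=0\}$. The generalized backward shift $R_\beta$ acts on $f$ with $f(\beta)=0$ by $(R_\beta f)(z)=\frac{f(z)}{z-\beta}$ for $z\neq\beta$ and $(R_\beta f)(\beta)=f'(\beta)$. The multiplication operator $\mathfrak{T}$ has domain $\mathcal{D}=\{f\in\mathcal{H}: zf(z)\in\mathcal{H}\}$ and $(\mathfrak{T}f)(z)=zf(z)$. A number $\gamma$ is a point of regular type of $\mathfrak{T}$ if there is $C_\gamma>0$ with $\|(\mathfrak{T}-\gamma I)f\|\ge C_\gamma\|f\|$ for all $f\in\mathcal{D}$. *)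

(* Defs.v *)
From Stdlib Require Import Reals ClassicalEpsilon FunctionalExtensionality.
From Coquelicot Require Import Coquelicot.
Open Scope R_scope.

Record CHilbert := {
  hs_car :> Type;
  hs_zero : hs_car;
  hs_add : hs_car -> hs_car -> hs_car;
  hs_opp : hs_car -> hs_car;
  hs_scal : C -> hs_car -> hs_car;
  hs_inner : hs_car -> hs_car -> C;
  hs_addA : forall x y z, hs_add x (hs_add y z) = hs_add (hs_add x y) z;
  hs_addC : forall x y, hs_add x y = hs_add y x;
  hs_add0 : forall x, hs_add x hs_zero = x;
  hs_addN : forall x, hs_add x (hs_opp x) = hs_zero;
  hs_scalA : forall a b x, hs_scal a (hs_scal b x) = hs_scal (Cmult a b) x;
  hs_scal1 : forall x, hs_scal (RtoC 1) x = x;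
  hs_scalDr : forall a x y, hs_scal a (hs_add x y) = hs_add (hs_scal a x) (hs_scal a y);
  hs_scalDl : forall a b x, hs_scal (Cplus a b) x = hs_add (hs_scal a x) (hs_scal b x);
  hs_innerDl : forall x y z, hs_inner (hs_add x y) z = Cplus (hs_inner x z) (hs_inner y z);
  hs_innerZl : forall a x y, hs_inner (hs_scal a x) y = Cmult a (hs_inner x y);
  hs_innerC : forall x y, hs_inner y x = Cconj (hs_inner x y);
  hs_inner_ge0 : forall x, 0 <= Re (hs_inner x x);
  hs_inner_eq0 : forall x, hs_inner x x = RtoC 0 -> x = hs_zero;
  hs_complete : forall u : nat -> hs_car,
    (forall eps, 0 < eps -> exists N, forall m n, (N <= m)%nat -> (N <= n)%nat ->
        sqrt (Re (hs_inner (hs_add (u m) (hs_opp (u n))) (hs_add (u m) (hs_opp (u n))))) < eps) ->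
    exists l, forall eps, 0 < eps -> exists N, forall n, (N <= n)%nat ->
        sqrt (Re (hs_inner (hs_add (u n) (hs_opp l)) (hs_add (u n) (hs_opp l)))) < eps;
  hs_separable : exists e : nat -> hs_car, forall x eps, 0 < eps -> exists n,
        sqrt (Re (hs_inner (hs_add x (hs_opp (e n))) (hs_add x (hs_opp (e n))))) < eps
}.

Arguments hs_zero {c}.
Arguments hs_add {c}.
Arguments hs_opp {c}.
Arguments hs_scal {c}.
Arguments hs_inner {c}.

Definition hnorm {X : CHilbert} (x : X) : R := sqrt (Re (hs_inner x x)).

Section Funs.
Variable X : CHilbert.

Definition is_derivX (f : C -> X) (z : C) (d : X) : Prop :=
  forall eps, 0 < eps -> exists delta, 0 < delta /\
    forall h : C, h <> RtoC 0 -> Cmod h < delta ->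
      hnorm (hs_add (hs_scal (Cinv h) (hs_add (f (Cplus z h)) (hs_opp (f z)))) (hs_opp d)) < eps.

Definition entireX (f : C -> X) : Prop := forall z, exists d, is_derivX f z d.

(* the derivative (chosen; unique for differentiable f) *)
Definition derivX (f : C -> X) (z : C) : X :=
  epsilon (inhabits (@hs_zero X)) (fun d => is_derivX f z d).

Definition fzero : C -> X := fun _ => hs_zero.
Definition fadd (f g : C -> X) : C -> X := fun z => hs_add (f z) (g z).
Definition fopp (f : C -> X) : C -> X := fun z => hs_opp (f z).
Definition fscal (a : C) (f : C -> X) : C -> X := fun z => hs_scal a (f z).

(** A space H (given by membership predicate [mem] and inner product [ip])
    which is a Hilbert space of X-valued entire functions, with pointwise
    vector space operations, possessing a B(X)-valued reproducing kernel
    K : gamma |-> (z |-> K_gamma(z)), K_gamma(z) u = K gamma z u. *)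
Record is_RKHS (mem : (C -> X) -> Prop) (ip : (C -> X) -> (C -> X) -> C)
    (K : C -> C -> X -> X) : Prop := {
  rk_zero : mem fzero;
  rk_add : forall f g, mem f -> mem g -> mem (fadd f g);
  rk_scal : forall a f, mem f -> mem (fscal a f);
  rk_innerDl : forall f g h, mem f -> mem g -> mem h ->
     ip (fadd f g) h = Cplus (ip f h) (ip g h);
  rk_innerZl : forall a f g, mem f -> mem g -> ip (fscal a f) g = Cmult a (ip f g);
  rk_innerC : forall f g, mem f -> mem g -> ip g f = Cconj (ip f g);
  rk_inner_ge0 : forall f, mem f -> 0 <= Re (ip f f);
  rk_inner_eq0 : forall f, mem f -> ip f f = RtoC 0 -> f = fzero;
  rk_complete : forall u : nat -> C -> X, (forall n, mem (u n)) ->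
    (forall eps, 0 < eps -> exists N, forall m n, (N <= m)%nat -> (N <= n)%nat ->
        sqrt (Re (ip (fadd (u m) (fopp (u n))) (fadd (u m) (fopp (u n))))) < eps) ->
    exists l, mem l /\ forall eps, 0 < eps -> exists N, forall n, (N <= n)%nat ->
        sqrt (Re (ip (fadd (u n) (fopp l)) (fadd (u n) (fopp l)))) < eps;
  rk_entire : forall f, mem f -> entireX f;
  rk_K_linear : forall gamma z a b u v,
     K gamma z (hs_add (hs_scal a u) (hs_scal b v))
     = hs_add (hs_scal a (K gamma z u)) (hs_scal b (K gamma z v));
  rk_K_bounded : forall gamma z, exists M, 0 <= M /\
     forall u, hnorm (K gamma z u) <= M * hnorm u;
  rk_K_mem : forall gamma u, mem (fun z => K gamma z u);
  rk_reproducing : forall gamma u f, mem f ->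
     ip f (fun z => K gamma z u) = hs_inner (f gamma) u
}.

Section Ops.
Variable mem : (C -> X) -> Prop.
Variable ip : (C -> X) -> (C -> X) -> C.

Definition normH (f : C -> X) : R := sqrt (Re (ip f f)).

Definition Hsub (beta : C) (f : C -> X) : Prop := mem f /\ f beta = hs_zero.

Definition Rshift (beta : C) (f : C -> X) : C -> X := fun z =>
  if excluded_middle_informative (z = beta) then derivX f beta
  else hs_scal (Cinv (Cminus z beta)) (f z).

(* domain D of the multiplication operator T *)
Definition Dom (f : C -> X) : Prop := mem f /\ mem (fun z => hs_scal z (f z)).

Definition Tmul (f : C -> X) : C -> X := fun z => hs_scal z (f z).

Definition Tshift (gamma : C) (f : C -> X) : C -> X :=
  fadd (Tmul f) (fopp (fscal gamma f)).

Definition regular_type (gamma : C) : Prop :=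
  exists c, 0 < c /\ forall f, Dom f -> normH (Tshift gamma f) >= c * normH f.

Definition Rshift_bounded_linear (beta : C) : Prop :=
  (forall f, Hsub beta f -> mem (Rshift beta f)) /\
  (forall a b f g, Hsub beta f -> Hsub beta g ->
     Rshift beta (fadd (fscal a f) (fscal b g))
     = fadd (fscal a (Rshift beta f)) (fscal b (Rshift beta g))) /\
  (exists M, 0 <= M /\ forall f, Hsub beta f -> normH (Rshift beta f) <= M * normH f).

End Ops.
End Funs.

(* Main.v *)
Require Import Defs.
From Stdlib Require Import Reals.
From Coquelicot Require Import Coquelicot.
From Stdlib Require Import Lia Lra Psatz ClassicalEpsilon FunctionalExtensionality Classical List.
Open Scope R_scope.

Record IPS_ax (V : Type) (z0 : V) (add : V -> V -> V) (opp : V -> V) (sc : C -> V -> V)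
  (ip : V -> V -> C) (P : V -> Prop) : Prop := {
  ax_addA : forall x y z, add x (add y z) = add (add x y) z;
  ax_addC : forall x y, add x y = add y x;
  ax_add0 : forall x, add x z0 = x;
  ax_addN : forall x, add x (opp x) = z0;
  ax_scA : forall a b x, sc a (sc b x) = sc (Cmult a b) x;
  ax_sc1 : forall x, sc (RtoC 1) x = x;
  ax_scDr : forall a x y, sc a (add x y) = add (sc a x) (sc a y);
  ax_scDl : forall a b x, sc (Cplus a b) x = add (sc a x) (sc b x);
  ax_P0 : P z0;
  ax_Padd : forall x y, P x -> P y -> P (add x y);
  ax_Psc : forall a x, P x -> P (sc a x);
  ax_ipDl : forall x y z, P x -> P y -> P z -> ip (add x y) z = Cplus (ip x z) (ip y z);
  ax_ipZl : forall a x y, P x -> P y -> ip (sc a x) y = Cmult a (ip x y);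
  ax_ipC : forall x y, P x -> P y -> ip y x = Cconj (ip x y);
  ax_ip_ge0 : forall x, P x -> 0 <= Re (ip x x);
  ax_ip_eq0 : forall x, P x -> ip x x = RtoC 0 -> x = z0;
}.

Arguments IPS_ax {V}.
Arguments ax_addA {V z0 add opp sc ip P} _.
Arguments ax_addC {V z0 add opp sc ip P} _.
Arguments ax_add0 {V z0 add opp sc ip P} _.
Arguments ax_addN {V z0 add opp sc ip P} _.
Arguments ax_scA {V z0 add opp sc ip P} _.
Arguments ax_sc1 {V z0 add opp sc ip P} _.
Arguments ax_scDr {V z0 add opp sc ip P} _.
Arguments ax_scDl {V z0 add opp sc ip P} _.
Arguments ax_P0 {V z0 add opp sc ip P} _.
Arguments ax_Padd {V z0 add opp sc ip P} _.
Arguments ax_Psc {V z0 add opp sc ip P} _.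
Arguments ax_ipDl {V z0 add opp sc ip P} _.
Arguments ax_ipZl {V z0 add opp sc ip P} _.
Arguments ax_ipC {V z0 add opp sc ip P} _.
Arguments ax_ip_ge0 {V z0 add opp sc ip P} _.
Arguments ax_ip_eq0 {V z0 add opp sc ip P} _.
Section IPS.
Variable V : Type.
Variables (z0 : V) (add : V -> V -> V) (opp : V -> V) (sc : C -> V -> V)
  (ip : V -> V -> C) (P : V -> Prop).
Variable ax : IPS_ax z0 add opp sc ip P.
Let addA := ax_addA ax.
Let addC := ax_addC ax.
Let add0 := ax_add0 ax.
Let addN := ax_addN ax.
Let scA := ax_scA ax.
Let sc1 := ax_sc1 ax.
Let scDr := ax_scDr ax.
Let scDl := ax_scDl ax.
Let P0 := ax_P0 ax.
Let Padd := ax_Padd ax.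
Let Psc := ax_Psc ax.
Let ipDl := ax_ipDl ax.
Let ipZl := ax_ipZl ax.
Let ipC := ax_ipC ax.
Let ip_ge0 := ax_ip_ge0 ax.
Let ip_eq0 := ax_ip_eq0 ax.

Lemma add0l x : add z0 x = x. Proof. rewrite addC; auto. Qed.

Lemma sc0 x : sc (RtoC 0) x = z0.
Proof.
  set (a := sc (RtoC 0) x).
  assert (Ha : add a a = a).
  { unfold a. rewrite <- scDl. f_equal. apply injective_projections; simpl; ring. }
  rewrite <- (addN a). rewrite <- Ha at 2. rewrite <- addA, addN, add0. reflexivity.
Qed.

Lemma opp_sc x : opp x = sc (RtoC (-1)) x.
Proof.
  assert (H : add x (sc (RtoC (-1)) x) = z0).
  { rewrite <- (sc1 x) at 1. rewrite <- scDl.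
    replace (Cplus (RtoC 1) (RtoC (-1))) with (RtoC 0) by (apply injective_projections; simpl; ring).
    apply sc0. }
  rewrite <- (add0 (opp x)). rewrite <- H. rewrite addA. rewrite (addC (opp x) x), addN, add0l. reflexivity.
Qed.

Lemma sc_z0 a : sc a z0 = z0.
Proof. rewrite <- (sc0 z0) at 1. rewrite scA. replace (Cmult a (RtoC 0)) with (RtoC 0). apply sc0.
  apply injective_projections; simpl; ring. Qed.

Lemma Popp x : P x -> P (opp x).
Proof. intros; rewrite opp_sc; auto. Qed.

Definition sub x y := add x (opp y).
Definition Q x := Re (ip x x).
Definition Nm x := sqrt (Q x).

Lemma Psub x y : P x -> P y -> P (sub x y).
Proof. intros; unfold sub; auto using Popp. Qed.

Lemma ip0l y : P y -> ip z0 y = RtoC 0.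
Proof. intros. rewrite <- (sc0 z0). rewrite ipZl; auto. apply injective_projections; simpl; ring. Qed.

Lemma ipDr x y z : P x -> P y -> P z -> ip x (add y z) = Cplus (ip x y) (ip x z).
Proof. intros. rewrite ipC, ipDl, (ipC x y), (ipC x z); auto.
  destruct (ip y x), (ip z x); apply injective_projections; simpl; ring. Qed.

Lemma ipZr a x y : P x -> P y -> ip x (sc a y) = Cmult (Cconj a) (ip x y).
Proof. intros. rewrite ipC, ipZl, (ipC x y); auto.
  destruct (ip y x), a; apply injective_projections; simpl; ring. Qed.

Lemma ip0r x : P x -> ip x z0 = RtoC 0.
Proof. intros. rewrite ipC, ip0l; auto. apply injective_projections; simpl; ring. Qed.

Lemma ip_im x : P x -> snd (ip x x) = 0.
Proof. intros. pose proof (ipC x x H H) as E. destruct (ip x x) as [r i]. simpl in *.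
  inversion E. lra. Qed.

Lemma Q_ge0 x : P x -> 0 <= Q x. Proof. apply ip_ge0. Qed.
Lemma N_ge0 x : 0 <= Nm x. Proof. apply sqrt_pos. Qed.
Lemma N_sq x : P x -> Nm x * Nm x = Q x.
Proof. intros; unfold Nm; apply sqrt_sqrt, Q_ge0; auto. Qed.

Lemma Q_eq0 x : P x -> Q x = 0 -> x = z0.
Proof. intros. apply ip_eq0; auto. pose proof (ip_im x H). unfold Q, Re in H0.
  destruct (ip x x); simpl in *; subst; reflexivity. Qed.
Lemma N_eq0 x : P x -> Nm x = 0 -> x = z0.
Proof. intros. apply Q_eq0; auto. rewrite <- N_sq, H0; auto; ring. Qed.

Lemma Q_expand x y a : P x -> P y ->
  Q (add x (sc a y)) = Q x + 2 * (fst a * fst (ip x y) + snd a * snd (ip x y))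
     + (fst a ^ 2 + snd a ^ 2) * Q y.
Proof.
  intros. unfold Q. rewrite ipDl, ipDr, ipDr, ipZl, ipZl, ipZr, ipZr, (ipC x y); auto.
  pose proof (ip_im y H0). destruct (ip x y) as [c1 c2], (ip y y) as [q1 q2], (ip x x) as [p1 p2], a as [a1 a2].
  simpl in *. subst. ring.
Qed.

Lemma CS_sq x y : P x -> P y ->
  fst (ip x y) ^ 2 + snd (ip x y) ^ 2 <= Q x * Q y.
Proof.
  intros Hx Hy.
  set (m := fst (ip x y) ^ 2 + snd (ip x y) ^ 2).
  assert (Hq : forall t, 0 <= Q x - 2 * t * m + t ^ 2 * m * Q y).
  { intro t. pose proof (Q_ge0 _ (Padd _ _ Hx (Psc (RtoC (-t) * ip x y)%C _ Hy))) as G.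
    rewrite Q_expand in G; auto. unfold m. destruct (ip x y) as [c1 c2]; simpl in *. nra. }
  assert (Hm : 0 <= m) by (unfold m; nra).
  pose proof (Q_ge0 x Hx). pose proof (Q_ge0 y Hy).
  destruct (Req_dec (Q y) 0) as [E|E].
  - destruct (Req_dec m 0) as [E2|E2]. rewrite E2. nra.
    exfalso. specialize (Hq ((Q x + 1) / (2 * m))). rewrite E in Hq.
    replace (2 * ((Q x + 1) / (2 * m)) * m) with (Q x + 1) in Hq by (field; lra). nra.
  - specialize (Hq (/ Q y)).
    replace ((/ Q y) ^ 2 * m * Q y) with (m / Q y) in Hq by (field; lra).
    assert (0 <= Q x - m / Q y) by lra.
    assert (0 < Q y) by lra.
    apply Rmult_le_compat_r with (r := Q y) in H1; [|lra].
    replace ((Q x - m / Q y) * Q y) with (Q x * Q y - m) in H1 by (field; lra). lra.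
Qed.

Lemma CS x y : P x -> P y -> Cmod (ip x y) <= Nm x * Nm y.
Proof.
  intros. unfold Cmod, Nm. rewrite <- sqrt_mult by (apply Q_ge0; auto).
  apply sqrt_le_1_alt. apply CS_sq; auto.
Qed.

Lemma N_sc a x : P x -> Nm (sc a x) = Cmod a * Nm x.
Proof.
  intros. unfold Nm, Q, Cmod. rewrite ipZl, ipZr; auto.
  rewrite <- sqrt_mult. f_equal. pose proof (ip_im x H).
  destruct (ip x x), a; simpl in *; subst; ring. nra. apply ip_ge0; auto.
Qed.

Lemma N_tri x y : P x -> P y -> Nm (add x y) <= Nm x + Nm y.
Proof.
  intros. pose proof (CS x y H H0) as Hc.
  assert (E : add x y = add x (sc (RtoC 1) y)) by (rewrite sc1; auto).
  assert (HQ : Q (add x y) <= (Nm x + Nm y) ^ 2).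
  { rewrite E, Q_expand; auto. simpl fst; simpl snd.
    rewrite <- (N_sq x), <- (N_sq y); auto.
    assert (fst (ip x y) <= Cmod (ip x y)).
    { unfold Cmod. destruct (ip x y) as [c1 c2]; simpl.
      apply Rle_trans with (Rabs c1). apply Rle_abs. rewrite <- sqrt_Rsqr_abs.
      apply sqrt_le_1_alt. unfold Rsqr. nra. }
    nra. }
  unfold Nm at 1. apply Rsqr_incr_0_var. rewrite Rsqr_sqrt. unfold Rsqr; lra.
  apply Q_ge0; auto. pose proof (N_ge0 x); pose proof (N_ge0 y); lra.
Qed.

Lemma opp_add x y : opp (add x y) = add (opp x) (opp y).
Proof. rewrite !opp_sc; auto. Qed.
Lemma opp_opp x : opp (opp x) = x.
Proof. rewrite !opp_sc, scA. rewrite <- (sc1 x) at 2. f_equal. apply injective_projections; simpl; ring. Qed.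
Lemma opp_z0 : opp z0 = z0.
Proof. rewrite opp_sc; apply sc_z0. Qed.
Lemma opp_sc' a x : opp (sc a x) = sc a (opp x).
Proof. rewrite !opp_sc, !scA. f_equal. apply injective_projections; simpl; ring. Qed.
Lemma sub_self x : sub x x = z0. Proof. apply addN. Qed.
Lemma sub_z0 x : sub x z0 = x. Proof. unfold sub; rewrite opp_z0; auto. Qed.
Lemma sub_opp x y : opp (sub x y) = sub y x.
Proof. unfold sub. rewrite opp_add, opp_opp; auto. Qed.
Lemma sub_add x y x' y' : sub (add x y) (add x' y') = add (sub x x') (sub y y').
Proof. unfold sub. rewrite opp_add. rewrite !addA. f_equal. rewrite <- !addA. f_equal. apply addC. Qed.
Lemma sub_sc a x y : sub (sc a x) (sc a y) = sc a (sub x y).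
Proof. unfold sub. rewrite scDr, opp_sc'. auto. Qed.
Lemma sub_tri x y z : sub x z = add (sub x y) (sub y z).
Proof. unfold sub. rewrite <- addA. f_equal. rewrite addA, (addC (opp y) y), addN, add0l. auto. Qed.
Lemma sub_eq x y : sub x y = z0 -> x = y.
Proof. intro H. assert (E : add (sub x y) y = x) by (unfold sub; rewrite <- addA, (addC (opp y) y), addN, add0; auto).
  rewrite <- E, H, add0l. auto. Qed.
Lemma add_sub x y : add (sub x y) y = x.
Proof. unfold sub. rewrite <- addA, (addC (opp y) y), addN, add0. auto. Qed.

Lemma N_opp x : P x -> Nm (opp x) = Nm x.
Proof. intros. rewrite opp_sc, N_sc; auto. rewrite Cmod_R. replace (Rabs (-1)) with 1 by (unfold Rabs; destruct Rcase_abs; lra). ring. Qed.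
Lemma N_sub_sym x y : P x -> P y -> Nm (sub x y) = Nm (sub y x).
Proof. intros. rewrite <- sub_opp, N_opp; auto using Psub. Qed.
Lemma N_sub_tri x y z : P x -> P y -> P z -> Nm (sub x z) <= Nm (sub x y) + Nm (sub y z).
Proof. intros. rewrite (sub_tri x y z). apply N_tri; auto using Psub. Qed.
Lemma N_z0 : Nm z0 = 0.
Proof. unfold Nm, Q. rewrite ip0l; auto. simpl. apply sqrt_0. Qed.
Lemma N_add_sub x y : P x -> P y -> Nm x - Nm y <= Nm (sub x y).
Proof. intros. pose proof (N_sub_tri x y z0). rewrite !sub_z0 in H1. pose proof (H1 H H0 P0). lra. Qed.

Inductive ex : Type := EV (n : nat) | EZ | EA (a b : ex) | EO (a : ex) | ES (c : C) (a : ex).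
Fixpoint ev (l : list V) (e : ex) : V :=
  match e with
  | EV n => nth n l z0 | EZ => z0 | EA a b => add (ev l a) (ev l b)
  | EO a => opp (ev l a) | ES c a => sc c (ev l a) end.
Fixpoint co (e : ex) (n : nat) : C :=
  match e with
  | EV m => if Nat.eqb n m then RtoC 1 else RtoC 0
  | EZ => RtoC 0 | EA a b => Cplus (co a n) (co b n)
  | EO a => Copp (co a n) | ES c a => Cmult c (co a n) end.
Fixpoint lin (l : list V) (f : nat -> C) : V :=
  match l with nil => z0 | v :: l' => add (sc (f O) v) (lin l' (fun i => f (S i))) end.

Lemma lin_ext l : forall f g, (forall i, (i < length l)%nat -> f i = g i) -> lin l f = lin l g.
Proof. induction l; intros f g H; simpl; auto. rewrite (H O) by (simpl; lia). f_equal.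
  apply IHl. intros; apply H; simpl; lia. Qed.
Lemma lin_add l : forall f g, lin l (fun i => Cplus (f i) (g i)) = add (lin l f) (lin l g).
Proof. induction l; intros; simpl. rewrite add0; auto. rewrite IHl, scDl.
  rewrite <- !addA. f_equal. rewrite !addA. f_equal. apply addC. Qed.
Lemma lin_sc l : forall c f, lin l (fun i => Cmult c (f i)) = sc c (lin l f).
Proof. induction l; intros; simpl. rewrite sc_z0; auto. rewrite IHl, scDr, scA. auto. Qed.
Lemma lin_opp l : forall f, lin l (fun i => Copp (f i)) = opp (lin l f).
Proof. intros. rewrite opp_sc, <- lin_sc. apply lin_ext. intros.
  apply injective_projections; simpl; ring. Qed.
Lemma lin_zero l : forall f, (forall i, f i = RtoC 0) -> lin l f = z0.
Proof. induction l; intros; simpl; auto. rewrite H, sc0, add0l. apply IHl. auto. Qed.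
Lemma lin_var l : forall n, lin l (fun i => if Nat.eqb i n then RtoC 1 else RtoC 0) = nth n l z0.
Proof. induction l; intros; simpl. destruct n; auto. destruct n; simpl.
  rewrite sc1, (lin_zero l), add0; [reflexivity|]. intros j; reflexivity.
  rewrite sc0, add0l. apply IHl. Qed.
Lemma ev_lin l e : ev l e = lin l (co e).
Proof. induction e; simpl.
  - symmetry. apply lin_var.
  - symmetry. apply lin_zero. auto.
  - rewrite IHe1, IHe2, lin_add. auto.
  - rewrite IHe, lin_opp. auto.
  - rewrite IHe, lin_sc. auto.
Qed.
Lemma ev_eq l e1 e2 : (forall i, (i < length l)%nat -> co e1 i = co e2 i) -> ev l e1 = ev l e2.
Proof. intros. rewrite !ev_lin. apply lin_ext. auto. Qed.

Lemma Q_sc a x : P x -> Q (sc a x) = (fst a ^ 2 + snd a ^ 2) * Q x.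
Proof. intros. rewrite <- !N_sq by auto. rewrite N_sc by auto. unfold Cmod.
  pose proof (sqrt_sqrt (fst a ^ 2 + snd a ^ 2)). assert (0 <= fst a ^ 2 + snd a ^ 2) by nra.
  specialize (H0 H1). nra. Qed.

Lemma parallelogram x y : P x -> P y -> Q (add x y) + Q (sub x y) = 2 * Q x + 2 * Q y.
Proof.
  intros. assert (E1 : add x y = add x (sc (RtoC 1) y)) by (rewrite sc1; auto).
  assert (E2 : sub x y = add x (sc (RtoC (-1)) y)) by (unfold sub; rewrite opp_sc; auto).
  rewrite E1, E2, !Q_expand by auto. simpl. ring.
Qed.

End IPS.
Arguments add0l {V z0 add opp sc ip P} _.
Arguments sc0 {V z0 add opp sc ip P} _.
Arguments opp_sc {V z0 add opp sc ip P} _.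
Arguments sc_z0 {V z0 add opp sc ip P} _.
Arguments Popp {V z0 add opp sc ip P} _.
Arguments Psub {V z0 add opp sc ip P} _.
Arguments ip0l {V z0 add opp sc ip P} _.
Arguments ipDr {V z0 add opp sc ip P} _.
Arguments ipZr {V z0 add opp sc ip P} _.
Arguments ip0r {V z0 add opp sc ip P} _.
Arguments ip_im {V z0 add opp sc ip P} _.
Arguments Q_ge0 {V z0 add opp sc ip P} _.
Arguments N_ge0 {V} ip x.
Arguments Q_sc {V z0 add opp sc ip P} _.
Arguments parallelogram {V z0 add opp sc ip P} _.
Arguments N_sq {V z0 add opp sc ip P} _.
Arguments Q_eq0 {V z0 add opp sc ip P} _.
Arguments N_eq0 {V z0 add opp sc ip P} _.
Arguments Q_expand {V z0 add opp sc ip P} _.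
Arguments CS_sq {V z0 add opp sc ip P} _.
Arguments CS {V z0 add opp sc ip P} _.
Arguments N_sc {V z0 add opp sc ip P} _.
Arguments N_tri {V z0 add opp sc ip P} _.
Arguments opp_add {V z0 add opp sc ip P} _.
Arguments opp_opp {V z0 add opp sc ip P} _.
Arguments opp_z0 {V z0 add opp sc ip P} _.
Arguments opp_sc {V z0 add opp sc ip P} _.
Arguments sub_self {V z0 add opp sc ip P} _.
Arguments sub_z0 {V z0 add opp sc ip P} _.
Arguments sub_opp {V z0 add opp sc ip P} _.
Arguments sub_add {V z0 add opp sc ip P} _.
Arguments sub_sc {V z0 add opp sc ip P} _.
Arguments sub_tri {V z0 add opp sc ip P} _.
Arguments sub_eq {V z0 add opp sc ip P} _.
Arguments add_sub {V z0 add opp sc ip P} _.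
Arguments N_opp {V z0 add opp sc ip P} _.
Arguments N_sub_sym {V z0 add opp sc ip P} _.
Arguments N_sub_tri {V z0 add opp sc ip P} _.
Arguments N_z0 {V z0 add opp sc ip P} _.
Arguments N_add_sub {V z0 add opp sc ip P} _.
Arguments sub {V} add opp x y.
Arguments Q {V} ip x.
Arguments Nm {V} ip x.
Arguments ev_eq {V z0 add opp sc ip P} _ l e1 e2 _.
Arguments ev {V} z0 add opp sc l e.

Ltac vidx x l :=
  match l with
  | (x :: _)%list => constr:(O)
  | (_ :: ?l')%list => let n := vidx x l' in constr:(S n)
  end.
Ltac vreify z0 add opp sc l t :=
  match t with
  | z0 => constr:(EZ)
  | add ?a ?b => let ra := vreify z0 add opp sc l a in let rb := vreify z0 add opp sc l b in constr:(EA ra rb)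
  | opp ?a => let ra := vreify z0 add opp sc l a in constr:(EO ra)
  | sc ?c ?a => let ra := vreify z0 add opp sc l a in constr:(ES c ra)
  | _ => let n := vidx t l in constr:(EV n)
  end.
Ltac vsolve AX l :=
  match type of AX with
  | @IPS_ax ?V ?z0 ?add ?opp ?sc ?ip ?P =>
    unfold sub;
    match goal with
    | |- ?a = ?b =>
      let ra := vreify z0 add opp sc l a in
      let rb := vreify z0 add opp sc l b in
      change (ev z0 add opp sc l ra = ev z0 add opp sc l rb);
      apply (ev_eq AX); simpl length;
      let i := fresh "vi" in let Hi := fresh "vHi" in intros i Hi;
      repeat (destruct i as [|i]; [simpl; try ring|try (exfalso; lia)])
    end
  end.

Lemma test (V : Type) z0 add opp sc ip P (AX : @IPS_ax V z0 add opp sc ip P) x y a b :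
  sub add opp (add (sc a x) (sc b y)) (sc a x) = sc b (add y z0).
Proof. vsolve AX (x :: y :: nil)%list. Qed.

Section XS.
Variable X : CHilbert.

Lemma XAX : IPS_ax (@hs_zero X) hs_add hs_opp hs_scal hs_inner (fun _ => True).
Proof.
  constructor; intros; auto using hs_addA, hs_addC, hs_add0, hs_addN, hs_scalA, hs_scal1,
    hs_scalDr, hs_scalDl, hs_innerDl, hs_innerZl, hs_innerC, hs_inner_ge0, hs_inner_eq0.
Qed.

Lemma FAX mem ip K : is_RKHS X mem ip K ->
  IPS_ax (fzero X) (fadd X) (fopp X) (fscal X) ip mem.
Proof.
  intro HR. destruct HR. constructor; intros; auto;
  unfold fadd, fopp, fscal, fzero; apply functional_extensionality; intros;
  auto using hs_addA, hs_addC, hs_add0, hs_addN, hs_scalA, hs_scal1, hs_scalDr, hs_scalDl.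
Qed.

Notation xN := (Nm (@hs_inner X)).
Notation xsub := (sub (@hs_add X) hs_opp).
Let XA := XAX.
Lemma hnorm_N (x : X) : hnorm x = xN x. Proof. reflexivity. Qed.

Lemma xN_sc a x : xN (hs_scal a x) = Cmod a * xN x.
Proof. apply (N_sc XA); auto. Qed.
Lemma xN_tri x y : xN (hs_add x y) <= xN x + xN y.
Proof. apply (N_tri XA); auto. Qed.
Lemma xN_sub_sym x y : xN (xsub x y) = xN (xsub y x).
Proof. apply (N_sub_sym XA); auto. Qed.
Lemma xN_sub_tri x y z : xN (xsub x z) <= xN (xsub x y) + xN (xsub y z).
Proof. apply (N_sub_tri XA); auto. Qed.
Lemma xN_eq0 x : xN x = 0 -> x = hs_zero.
Proof. apply (N_eq0 XA); auto. Qed.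
Lemma xN_ge0 x : 0 <= xN x.
Proof. apply N_ge0. Qed.
Lemma xsub_eq x y : xsub x y = hs_zero -> x = y.
Proof. apply (sub_eq XA). Qed.

Lemma xN_small x : (forall eps, 0 < eps -> xN x < eps) -> x = hs_zero.
Proof.
  intros H. apply xN_eq0. pose proof (xN_ge0 x).
  destruct (Req_dec (xN x) 0); auto. specialize (H (xN x) ltac:(lra)). lra.
Qed.

Lemma derivX_unique f z d1 d2 : is_derivX X f z d1 -> is_derivX X f z d2 -> d1 = d2.
Proof.
  intros H1 H2. apply xsub_eq, xN_small. intros eps Heps.
  destruct (H1 (eps/2)) as [e1 [He1 G1]]; [lra|].
  destruct (H2 (eps/2)) as [e2 [He2 G2]]; [lra|].
  set (h := RtoC (Rmin e1 e2 / 2)).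
  assert (Hh : h <> RtoC 0).
  { unfold h; intro E. inversion E. pose proof (Rmin_glb_lt e1 e2 0 He1 He2). lra. }
  assert (Hm : Cmod h < e1 /\ Cmod h < e2).
  { unfold h. rewrite Cmod_R. rewrite Rabs_pos_eq. pose proof (Rmin_l e1 e2). pose proof (Rmin_r e1 e2).
    pose proof (Rmin_glb_lt e1 e2 0 He1 He2). lra. pose proof (Rmin_glb_lt e1 e2 0 He1 He2). lra. }
  specialize (G1 h Hh (proj1 Hm)). specialize (G2 h Hh (proj2 Hm)).
  set (q := hs_scal (Cinv h) (hs_add (f (Cplus z h)) (hs_opp (f z)))) in *.
  pose proof (xN_sub_tri d1 q d2). rewrite (xN_sub_sym d1 q) in H. rewrite hnorm_N in G1, G2. unfold sub in *. lra.
Qed.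

Lemma derivX_spec f z d : is_derivX X f z d -> derivX X f z = d.
Proof.
  intros H. unfold derivX. apply (derivX_unique f z); auto.
  apply epsilon_spec. exists d; auto.
Qed.

Lemma deriv_cont f z d : is_derivX X f z d -> forall eps, 0 < eps -> exists delta, 0 < delta /\
  forall h, Cmod h < delta -> xN (xsub (f (Cplus z h)) (f z)) < eps.
Proof.
  intros H eps Heps. destruct (H 1 ltac:(lra)) as [del [Hdel G]].
  pose proof (xN_ge0 d).
  exists (Rmin del (eps / (xN d + 1))). split.
  { apply Rmin_glb_lt; auto. apply Rdiv_lt_0_compat; lra. }
  intros h Hh. destruct (Ceq_dec h (RtoC 0)) as [E|E].
  - subst. replace (Cplus z (RtoC 0)) with z by (apply injective_projections; simpl; ring).
    unfold sub. rewrite hs_addN. unfold Nm, Q. rewrite (ip0l XA); auto. simpl. rewrite sqrt_0. lra.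
  - assert (Hh1 : Cmod h < del) by (pose proof (Rmin_l del (eps / (xN d + 1))); lra).
    assert (Hh2 : Cmod h < eps / (xN d + 1)) by (pose proof (Rmin_r del (eps / (xN d + 1))); lra).
    specialize (G h E Hh1). rewrite hnorm_N in G.
    set (q := hs_scal (Cinv h) (hs_add (f (Cplus z h)) (hs_opp (f z)))) in *.
    assert (Eq : xsub (f (Cplus z h)) (f z) = hs_scal h q).
    { unfold q. rewrite hs_scalA. replace (Cmult h (Cinv h)) with (RtoC 1) by (field; auto).
      rewrite hs_scal1. reflexivity. }
    rewrite Eq, xN_sc.
    assert (xN q <= xN d + 1).
    { pose proof (xN_sub_tri q d hs_zero). rewrite !(sub_z0 XA) in H1. unfold sub in *. lra. }
    pose proof (Cmod_ge_0 h).
    apply Rle_lt_trans with (Cmod h * (xN d + 1)). apply Rmult_le_compat_l; lra.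
    apply Rmult_lt_reg_r with (/ (xN d + 1)). apply Rinv_0_lt_compat; lra.
    rewrite Rmult_assoc, Rinv_r by lra. unfold Rdiv in Hh2. lra.
Qed.

Lemma deriv_lin f g z a b d1 d2 : is_derivX X f z d1 -> is_derivX X g z d2 ->
  is_derivX X (fadd X (fscal X a f) (fscal X b g)) z (hs_add (hs_scal a d1) (hs_scal b d2)).
Proof.
  intros H1 H2 eps Heps.
  pose proof (Cmod_ge_0 a). pose proof (Cmod_ge_0 b).
  set (e := eps / (Cmod a + Cmod b + 1)).
  assert (He : 0 < e) by (apply Rdiv_lt_0_compat; lra).
  destruct (H1 e He) as [e1 [He1 G1]]. destruct (H2 e He) as [e2 [He2 G2]].
  exists (Rmin e1 e2). split. apply Rmin_glb_lt; auto.
  intros h Hh Hm. specialize (G1 h Hh (Rlt_le_trans _ _ _ Hm (Rmin_l _ _))).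
  specialize (G2 h Hh (Rlt_le_trans _ _ _ Hm (Rmin_r _ _))).
  rewrite hnorm_N in *. unfold fadd, fscal.
  match goal with |- xN ?E < _ =>
   assert (Eq : E = hs_add (hs_scal a (hs_add (hs_scal (/ h) (hs_add (f (z + h)%C) (hs_opp (f z)))) (hs_opp d1)))
                           (hs_scal b (hs_add (hs_scal (/ h) (hs_add (g (z + h)%C) (hs_opp (g z)))) (hs_opp d2))))
   by (vsolve XA (f (z+h)%C :: f z :: g (z+h)%C :: g z :: d1 :: d2 :: nil)) end.
  rewrite Eq. eapply Rle_lt_trans. apply xN_tri. rewrite !xN_sc.
  assert (Cmod a * e + Cmod b * e < eps).
  { unfold e. replace (Cmod a * (eps / (Cmod a + Cmod b + 1)) + Cmod b * (eps / (Cmod a + Cmod b + 1)))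
     with (eps * ((Cmod a + Cmod b) / (Cmod a + Cmod b + 1))) by (field; lra).
    assert ((Cmod a + Cmod b) / (Cmod a + Cmod b + 1) < 1).
    { apply Rmult_lt_reg_r with (Cmod a + Cmod b + 1). lra. unfold Rdiv. rewrite Rmult_assoc, Rinv_l; lra. }
    nra. }
  nra.
Qed.

Lemma deriv_Tshift g beta :
  (forall eps, 0 < eps -> exists delta, 0 < delta /\
     forall h, Cmod h < delta -> xN (xsub (g (Cplus beta h)) (g beta)) < eps) ->
  is_derivX X (Tshift X beta g) beta (g beta).
Proof.
  intros Hc eps Heps. destruct (Hc eps Heps) as [d [Hd G]]. exists d. split; auto.
  intros h Hh Hm. specialize (G h Hm). rewrite hnorm_N. unfold Tshift, fadd, fopp, fscal, Tmul.
  match goal with |- xN ?E < _ => assert (Eq : E = xsub (g (Cplus beta h)) (g beta)) end.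
  { unfold sub. f_equal.
    vsolve XA (g (beta + h)%C :: g beta :: nil). field. auto. }
  rewrite Eq; auto.
Qed.

End XS.

Lemma Re_le_Cmod z : Re z <= Cmod z.
Proof. unfold Cmod, Re. destruct z as [a b]; simpl.
  apply Rle_trans with (Rabs a). apply Rle_abs. rewrite <- sqrt_Rsqr_abs.
  apply sqrt_le_1_alt. unfold Rsqr. nra. Qed.

Lemma Cminus_neq z b : z <> b -> Cminus z b <> RtoC 0.
Proof. intros H E. apply H. assert (z = Cplus (Cminus z b) b) by ring. rewrite E in H0. rewrite H0. ring. Qed.

Section HS.
Variable X : CHilbert.
Variables (mem : (C -> X) -> Prop) (ip : (C -> X) -> (C -> X) -> C) (K : C -> C -> X -> X).
Hypothesis HR : is_RKHS X mem ip K.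
Let FA := FAX X mem ip K HR.
Let XA := XAX X.
Notation xN := (Nm (@hs_inner X)).
Notation xsub := (sub (@hs_add X) hs_opp).
Notation hN := (Nm ip).
Notation hsub := (sub (fadd X) (fopp X)).

Lemma derivX_ok f z : mem f -> is_derivX X f z (derivX X f z).
Proof. intros. destruct (rk_entire _ _ _ _ HR f H z) as [d Hd]. rewrite (derivX_spec X f z d); auto. Qed.

Lemma cont_mem f z : mem f -> forall eps, 0 < eps -> exists delta, 0 < delta /\
  forall h, Cmod h < delta -> xN (xsub (f (Cplus z h)) (f z)) < eps.
Proof. intros. eapply deriv_cont; eauto. apply derivX_ok; auto. Qed.

Lemma eval_bound gam : exists c, 0 <= c /\ forall f, mem f -> xN (f gam) <= c * hN f.
Proof.
  destruct (rk_K_bounded _ _ _ _ HR gam gam) as [M [HM HK]].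
  exists (sqrt M). split. apply sqrt_pos. intros f Hf.
  set (u := f gam). set (k := fun z => K gam z u).
  assert (Hk : mem k) by apply (rk_K_mem _ _ _ _ HR).
  assert (E1 : hs_inner u u = ip f k) by (symmetry; apply (rk_reproducing _ _ _ _ HR); auto).
  assert (E2 : ip k k = hs_inner (K gam gam u) u) by (apply (rk_reproducing _ _ _ _ HR); auto).
  assert (B1 : xN u * xN u <= hN f * hN k).
  { rewrite (N_sq XA); auto. unfold Q. rewrite E1. eapply Rle_trans. apply Re_le_Cmod. apply (CS FA); auto. }
  assert (B2 : hN k <= sqrt M * xN u).
  { unfold Nm at 1. unfold Q. rewrite E2. unfold Nm. rewrite <- sqrt_mult by (auto; apply (Q_ge0 XA); auto).
    apply sqrt_le_1_alt. eapply Rle_trans. apply Re_le_Cmod. eapply Rle_trans. apply (CS XA); auto.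
    eapply Rle_trans. apply Rmult_le_compat_r. apply N_ge0. apply HK.
    rewrite Rmult_assoc. rewrite (hnorm_N X), (N_sq XA); auto. lra. }
  pose proof (N_ge0 (@hs_inner X) u). pose proof (N_ge0 ip f). pose proof (N_ge0 ip k).
  pose proof (sqrt_pos M).
  destruct (Req_dec (xN u) 0) as [Z|Z]. rewrite Z. nra.
  assert (xN u * xN u <= (sqrt M * hN f) * xN u) by nra.
  apply Rmult_le_reg_r with (xN u). lra. lra.
Qed.

Lemma Rsh_beta f beta : Rshift X beta f beta = derivX X f beta.
Proof. unfold Rshift. destruct (excluded_middle_informative (beta = beta)); tauto. Qed.
Lemma Rsh_ne f beta z : z <> beta -> Rshift X beta f z = hs_scal (Cinv (Cminus z beta)) (f z).
Proof. intros. unfold Rshift. destruct (excluded_middle_informative (z = beta)); tauto. Qed.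

Lemma Tsh_mem g beta : Dom X mem g -> mem (Tshift X beta g).
Proof. intros [H1 H2]. unfold Tshift. apply (rk_add _ _ _ _ HR). exact H2.
  apply (Popp FA). apply (rk_scal _ _ _ _ HR); auto. Qed.
Lemma Tsh_at g beta : Tshift X beta g beta = hs_zero.
Proof. unfold Tshift, fadd, fopp, fscal, Tmul. apply hs_addN. Qed.

Lemma Rsh_Tsh g beta : mem g -> Rshift X beta (Tshift X beta g) = g.
Proof.
  intros Hg. apply functional_extensionality; intro z. unfold Rshift.
  destruct (excluded_middle_informative (z = beta)) as [E|E].
  - subst. apply derivX_spec. apply deriv_Tshift. apply cont_mem; auto.
  - unfold Tshift, fadd, fopp, fscal, Tmul. vsolve XA (g z :: nil).
    field. apply Cminus_neq; auto.
Qed.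

Lemma Tsh_Rsh f beta : f beta = hs_zero -> Tshift X beta (Rshift X beta f) = f.
Proof.
  intros Hf. apply functional_extensionality; intro z. unfold Tshift, fadd, fopp, fscal, Tmul, Rshift.
  destruct (excluded_middle_informative (z = beta)) as [E|E].
  - subst. rewrite Hf. apply hs_addN.
  - vsolve XA (f z :: nil).
    field. apply Cminus_neq; auto.
Qed.

Lemma Tmul_dec r beta : Tmul X r = fadd X (Tshift X beta r) (fscal X beta r).
Proof. apply functional_extensionality; intro z. unfold Tshift, fadd, fopp, fscal, Tmul.
  vsolve XA (r z :: nil). Qed.

Lemma Rsh_lin f g a b beta : mem f -> mem g ->
  Rshift X beta (fadd X (fscal X a f) (fscal X b g))
  = fadd X (fscal X a (Rshift X beta f)) (fscal X b (Rshift X beta g)).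
Proof.
  intros Hf Hg. apply functional_extensionality; intro z.
  destruct (Ceq_dec z beta) as [E|E].
  - subst. unfold fadd at 2, fscal at 3 4. rewrite !Rsh_beta. apply derivX_spec. apply deriv_lin; apply derivX_ok; auto.
  - unfold fadd at 2, fscal at 3 4. rewrite !Rsh_ne by auto. unfold fadd, fscal. vsolve XA (f z :: g z :: nil).
Qed.

End HS.

Lemma sqrt_plus_sqrt_le a b : 0 <= a -> 0 <= b -> sqrt (a + b) <= sqrt a + sqrt b.
Proof. intros. rewrite <- (sqrt_Rsqr (sqrt a + sqrt b)) by (pose proof (sqrt_pos a); pose proof (sqrt_pos b); lra).
  apply sqrt_le_1_alt. unfold Rsqr. pose proof (sqrt_sqrt a H). pose proof (sqrt_sqrt b H0).
  pose proof (sqrt_pos a); pose proof (sqrt_pos b). nra. Qed.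

Section BD.
Variable X : CHilbert.
Variables (mem : (C -> X) -> Prop) (ip : (C -> X) -> (C -> X) -> C) (K : C -> C -> X -> X).
Hypothesis HR : is_RKHS X mem ip K.
Variable beta : C.
Hypothesis HRc : forall f, Hsub X mem beta f -> mem (Rshift X beta f).
Let FA := FAX X mem ip K HR.
Let XA := XAX X.
Notation xN := (Nm (@hs_inner X)).
Notation xsub := (sub (@hs_add X) hs_opp).
Notation hN := (Nm ip).
Notation hsub := (sub (fadd X) (fopp X)).
Notation W := (Hsub X mem beta).
Notation T := (Rshift X beta).
Definition phi h f := ip (T f) h.

Definition conv (u : nat -> C -> X) l := forall eps, 0 < eps -> exists n0, forall n, (n0 <= n)%nat ->
  hN (hsub (u n) l) < eps.

Lemma W_mem f : W f -> mem f. Proof. intros [H _]; auto. Qed.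
Lemma W_zero : W (fzero X). Proof. split. apply (rk_zero _ _ _ _ HR). reflexivity. Qed.
Lemma W_comb a b f g : W f -> W g -> W (fadd X (fscal X a f) (fscal X b g)).
Proof. intros [H1 H2] [H3 H4]. split. apply (rk_add _ _ _ _ HR); apply (rk_scal _ _ _ _ HR); auto.
  unfold fadd, fscal. rewrite H2, H4, !(sc_z0 XA). apply hs_add0. Qed.
Lemma W_add f g : W f -> W g -> W (fadd X f g).
Proof. intros. replace (fadd X f g) with (fadd X (fscal X (RtoC 1) f) (fscal X (RtoC 1) g)).
  apply W_comb; auto. rewrite !(ax_sc1 FA). auto. Qed.
Lemma W_sc a f : W f -> W (fscal X a f).
Proof. intros. replace (fscal X a f) with (fadd X (fscal X a f) (fscal X (RtoC 0) f)).
  apply W_comb; auto. rewrite (sc0 FA), (ax_add0 FA). auto. Qed.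
Lemma W_sub f g : W f -> W g -> W (hsub f g).
Proof. intros. unfold sub. rewrite (opp_sc FA). apply W_add; auto. apply W_sc; auto. Qed.

Lemma W_closed u l : (forall n, W (u n)) -> mem l -> conv u l -> W l.
Proof.
  intros Hu Hl Hc. split; auto. apply (xN_small X). intros eps Heps.
  destruct (eval_bound X mem ip K HR beta) as [c [Hc0 Hb]].
  destruct (Hc (eps / (c + 1))) as [n0 Hn0]. apply Rdiv_lt_0_compat; lra.
  specialize (Hn0 n0 (le_n _)). specialize (Hb (hsub (u n0) l) (Psub FA _ _ (W_mem _ (Hu n0)) Hl)).
  unfold sub, fadd, fopp in Hb. destruct (Hu n0) as [_ E]. rewrite E in Hb.
  rewrite (add0l XA) in Hb. rewrite (N_opp XA) in Hb by auto.
  fold (hsub (u n0) l) in Hb. pose proof (N_ge0 ip (hsub (u n0) l)).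
  apply Rle_lt_trans with (c * hN (hsub (u n0) l)); auto.
  apply Rle_lt_trans with ((c+1) * hN (hsub (u n0) l)). nra.
  apply Rmult_lt_reg_r with (/ (c+1)). apply Rinv_0_lt_compat; lra.
  replace ((c + 1) * hN (hsub (u n0) l) * / (c + 1)) with (hN (hsub (u n0) l)) by (field; lra).
  unfold Rdiv in Hn0. lra.
Qed.

Lemma phi_comb h a b f g : mem h -> W f -> W g ->
  phi h (fadd X (fscal X a f) (fscal X b g)) = Cplus (Cmult a (phi h f)) (Cmult b (phi h g)).
Proof.
  intros Hh Hf Hg. unfold phi. rewrite (Rsh_lin X mem ip K HR) by (apply W_mem; auto).
  rewrite (ax_ipDl FA), !(ax_ipZl FA); auto; try apply (ax_Psc FA); auto.
Qed.

Lemma phi_scr c h f : mem h -> W f -> phi (fscal X c h) f = Cmult (Cconj c) (phi h f).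
Proof. intros. unfold phi. apply (ipZr FA); auto. Qed.

Lemma phi_bound h f : mem h -> W f -> Cmod (phi h f) <= hN (T f) * hN h.
Proof. intros. unfold phi. apply (CS FA); auto. Qed.

Lemma phi_zero h : mem h -> phi h (fzero X) = RtoC 0.
Proof.
  intros. replace (fzero X) with (fadd X (fscal X (RtoC 0) (fzero X)) (fscal X (RtoC 0) (fzero X))).
  rewrite phi_comb; auto using W_zero. ring. rewrite !(sc0 FA). apply (ax_add0 FA).
Qed.

Lemma phi_h0 f : W f -> phi (fzero X) f = RtoC 0.
Proof. intros. unfold phi. apply (ip0r FA); auto. Qed.

Lemma Cmod_RtoC_pos r : 0 <= r -> Cmod (RtoC r) = r.
Proof. intros. rewrite Cmod_R. apply Rabs_pos_eq; auto. Qed.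

Lemma normalize f : mem f -> 0 < hN f -> hN (fscal X (RtoC (/ hN f)) f) = 1.
Proof. intros. rewrite (N_sc FA) by auto. rewrite Cmod_RtoC_pos. field. lra.
  left. apply Rinv_0_lt_compat; auto. Qed.

Lemma opnorm h : mem h -> (exists c, forall f, W f -> Cmod (phi h f) <= c * hN f) ->
  exists m, 0 <= m /\ (forall f, W f -> Cmod (phi h f) <= m * hN f) /\
    (forall eps, 0 < eps -> exists f, W f /\ hN f <= 1 /\ m - eps < Cmod (phi h f)).
Proof.
  intros Hh [c Hc].
  set (E := fun r => exists f, W f /\ hN f <= 1 /\ r = Cmod (phi h f)).
  assert (Hb : bound E).
  { exists (Rmax c 0). intros r [f [Hf [Hn Er]]]. subst. eapply Rle_trans. apply Hc; auto.
    pose proof (N_ge0 ip f). pose proof (Rmax_l c 0). pose proof (Rmax_r c 0).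
    apply Rle_trans with (Rmax c 0 * hN f). apply Rmult_le_compat_r; lra. nra. }
  assert (Hne : exists r, E r).
  { exists (Cmod (phi h (fzero X))). exists (fzero X). split. apply W_zero. split; auto.
    unfold Nm, Q. rewrite (ip0l FA). simpl. rewrite sqrt_0. lra. apply (ax_P0 FA). }
  destruct (completeness E Hb Hne) as [m [Hub Hlub]].
  exists m. split; [|split].
  - apply Rle_trans with (Cmod (phi h (fzero X))). apply Cmod_ge_0. apply Hub.
    exists (fzero X). split. apply W_zero. split; auto.
    unfold Nm, Q. rewrite (ip0l FA). simpl. rewrite sqrt_0. lra. apply (ax_P0 FA).
  - intros f Hf. pose proof (N_ge0 ip f). destruct (Req_dec (hN f) 0) as [Z|Z].
    + apply (N_eq0 FA) in Z; auto using W_mem. subst. rewrite phi_zero; auto. rewrite Cmod_0. 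
      assert (0 <= m). { apply Rle_trans with (Cmod (phi h (fzero X))). apply Cmod_ge_0. apply Hub.
        exists (fzero X). split. apply W_zero. split; auto.
        unfold Nm, Q. rewrite (ip0l FA). simpl. rewrite sqrt_0. lra. apply (ax_P0 FA). }
      nra.
    + set (f' := fscal X (RtoC (/ hN f)) f).
      assert (Hf' : E (Cmod (phi h f'))).
      { exists f'. split. apply W_sc; auto. split; auto. unfold f'. rewrite normalize; auto using W_mem. lra. lra. }
      apply Hub in Hf'.
      replace f' with (fadd X (fscal X (RtoC (/ hN f)) f) (fscal X (RtoC 0) f)) in Hf'
        by (unfold f'; rewrite (sc0 FA), (ax_add0 FA); auto).
      rewrite phi_comb in Hf' by auto. rewrite Cmult_0_l, Cplus_0_r, Cmod_mult, Cmod_RtoC_pos in Hf'.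
      apply Rmult_le_compat_r with (r := hN f) in Hf'; [|lra].
      replace (/ hN f * Cmod (phi h f) * hN f) with (Cmod (phi h f)) in Hf' by (field; lra). lra.
      left; apply Rinv_0_lt_compat; lra.
  - intros eps Heps. apply NNPP. intro Hn.
    assert (m - eps >= m). { apply Rle_ge, Hlub. intros r [f [Hf [Hn1 Er]]]. subst.
      apply Rnot_lt_le. intro. apply Hn. exists f; auto. }
    lra.
Qed.

Definition Sb h := mem h /\ exists c, forall f, W f -> Cmod (phi h f) <= c * hN f.

Lemma Cmod_sub_le a b : Cmod (Cminus a b) <= Cmod a + Cmod b.
Proof. unfold Cminus. eapply Rle_trans. apply Cmod_triangle. rewrite Cmod_opp. lra. Qed.

Lemma step_lemma h m x r : Sb h -> 0 < m -> 0 < r ->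
  (forall eps, 0 < eps -> exists f, W f /\ hN f <= 1 /\ m - eps < Cmod (phi h f)) ->
  W x -> exists x', W x' /\ hN (hsub x' x) <= r /\ r * (3/4 * m) <= Cmod (phi h x').
Proof.
  intros [Hh _] Hm Hr Happ Wx. destruct (Happ (m/4)) as [z [Wz [Hz Hpz]]]; [lra|].
  set (x1 := fadd X (fscal X (RtoC 1) x) (fscal X (RtoC r) z)).
  set (x2 := fadd X (fscal X (RtoC 1) x) (fscal X (RtoC (-r)) z)).
  assert (E1 : phi h x1 = Cplus (Cmult (RtoC 1) (phi h x)) (Cmult (RtoC r) (phi h z))) by (apply phi_comb; auto).
  assert (E2 : phi h x2 = Cplus (Cmult (RtoC 1) (phi h x)) (Cmult (RtoC (-r)) (phi h z))) by (apply phi_comb; auto).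
  assert (D : Cminus (phi h x1) (phi h x2) = Cmult (RtoC (2 * r)) (phi h z)).
  { rewrite E1, E2. apply injective_projections; simpl; ring. }
  pose proof (Cmod_sub_le (phi h x1) (phi h x2)) as T1. rewrite D, Cmod_mult, Cmod_RtoC_pos in T1 by lra.
  assert (Nz1 : hN (hsub x1 x) <= r).
  { replace (hsub x1 x) with (fscal X (RtoC r) z) by (unfold x1; vsolve FA (x :: z :: nil)).
    rewrite (N_sc FA), Cmod_RtoC_pos by (auto using W_mem; lra). nra. }
  assert (Nz2 : hN (hsub x2 x) <= r).
  { replace (hsub x2 x) with (fscal X (RtoC (-r)) z) by (unfold x2; vsolve FA (x :: z :: nil)).
    rewrite (N_sc FA) by (auto using W_mem). rewrite Cmod_R, Rabs_left by lra. nra. }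
  destruct (Rle_dec (r * Cmod (phi h z)) (Cmod (phi h x1))).
  - exists x1. split. apply W_comb; auto. split; auto. nra.
  - exists x2. split. apply W_comb; auto. split; auto. nra.
Qed.

Lemma ubp : exists M, 0 <= M /\ forall h, Sb h -> forall f, W f -> Cmod (phi h f) <= M * hN f * hN h.
Proof.
  apply NNPP; intro NU.
  assert (Big : forall n : nat, exists p : (C -> X) * R, Sb (fst p) /\ hN (fst p) <= 1 /\ 4 ^ n <= snd p /\
     (forall f, W f -> Cmod (phi (fst p) f) <= snd p * hN f) /\
     (forall eps, 0 < eps -> exists f, W f /\ hN f <= 1 /\ snd p - eps < Cmod (phi (fst p) f))).
  { intro n.
    assert (Ex : exists h f, Sb h /\ W f /\ 4 ^ n * hN f * hN h < Cmod (phi h f)).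
    { apply NNPP; intro C0. apply NU. exists (4 ^ n). split. apply pow_le; lra.
      intros h Sh f Wf. apply Rnot_lt_le. intro. apply C0. eauto. }
    destruct Ex as [h [f [[Hh [c Hc]] [Wf Hlt]]]].
    pose proof (N_ge0 ip h) as Hh0. pose proof (N_ge0 ip f) as Hf0. pose proof (pow_le 4 n ltac:(lra)).
    assert (Hpos : 0 < hN h).
    { destruct (Req_dec (hN h) 0) as [Z|Z]; [|lra]. apply (N_eq0 FA) in Z; auto. subst.
      rewrite phi_h0 in Hlt; auto. rewrite Cmod_0, (N_z0 FA) in Hlt. lra. }
    set (h' := fscal X (RtoC (/ hN h)) h).
    assert (Ph : forall g, W g -> Cmod (phi h' g) = / hN h * Cmod (phi h g)).
    { intros g Wg. unfold h'. rewrite phi_scr, Cmod_mult, Cmod_conj, Cmod_RtoC_pos; auto.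
      left; apply Rinv_0_lt_compat; auto. }
    assert (Sh' : Sb h').
    { split. apply (ax_Psc FA); auto. exists (/ hN h * c). intros g Wg. rewrite Ph; auto.
      rewrite Rmult_assoc. apply Rmult_le_compat_l. left; apply Rinv_0_lt_compat; auto. auto. }
    destruct (opnorm h' (proj1 Sh') (proj2 Sh')) as [m [Hm0 [Hm1 Hm2]]].
    exists (h', m). simpl. split; auto. split.
    { unfold h'. rewrite normalize; auto. lra. }
    split; auto.
    specialize (Hm1 f Wf). rewrite Ph in Hm1 by auto.
    assert (4 ^ n * hN f < / hN h * Cmod (phi h f)).
    { apply Rmult_lt_reg_r with (hN h); auto. replace (/ hN h * Cmod (phi h f) * hN h) with (Cmod (phi h f)) by (field; lra). lra. }
    nra. }
  pose (hs := fun n => fst (proj1_sig (constructive_indefinite_description _ (Big n)))).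
  pose (ms := fun n => snd (proj1_sig (constructive_indefinite_description _ (Big n)))).
  assert (HB : forall n, Sb (hs n) /\ hN (hs n) <= 1 /\ 4 ^ n <= ms n /\
     (forall f, W f -> Cmod (phi (hs n) f) <= ms n * hN f) /\
     (forall eps, 0 < eps -> exists f, W f /\ hN f <= 1 /\ ms n - eps < Cmod (phi (hs n) f))).
  { intro n. unfold hs, ms. destruct (constructive_indefinite_description _ (Big n)) as [p Hp]. exact Hp. }
  assert (Step : forall n x, exists x', W x -> (W x' /\ hN (hsub x' x) <= (/3) ^ (S n) /\
      (/3) ^ (S n) * (3/4 * ms (S n)) <= Cmod (phi (hs (S n)) x'))).
  { intros n x. destruct (classic (W x)) as [Wx|Wx]; [|exists x; tauto].
    destruct (HB (S n)) as [Sh [_ [Hm [_ Happ]]]].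
    destruct (step_lemma (hs (S n)) (ms (S n)) x ((/3) ^ (S n))) as [x' Hx']; auto.
    pose proof (pow_lt 4 (S n) ltac:(lra)). lra. apply pow_lt. lra. exists x'; auto. }
  pose (nx := fun n x => proj1_sig (constructive_indefinite_description _ (Step n x))).
  assert (Hnx : forall n x, W x -> W (nx n x) /\ hN (hsub (nx n x) x) <= (/3) ^ (S n) /\
      (/3) ^ (S n) * (3/4 * ms (S n)) <= Cmod (phi (hs (S n)) (nx n x))).
  { intros n x. unfold nx. destruct (constructive_indefinite_description _ (Step n x)) as [x' Hx']. exact Hx'. }
  pose (xs := nat_rect (fun _ => C -> X) (fzero X) nx).
  assert (XsS : forall n, xs (S n) = nx n (xs n)) by reflexivity.
  assert (XsW : forall n, W (xs n)).
  { induction n. apply W_zero. rewrite XsS. apply Hnx; auto. }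
  assert (Xc : forall n k, hN (hsub (xs (n + k)%nat) (xs n)) <= (/3) ^ n / 2 - (/3) ^ (n + k) / 2).
  { intros n k. induction k.
    - rewrite Nat.add_0_r, (sub_self FA), (N_z0 FA). lra.
    - rewrite Nat.add_succ_r. eapply Rle_trans. apply (N_sub_tri FA) with (y := xs (n + k)%nat); auto using W_mem.
      rewrite XsS. pose proof (proj1 (proj2 (Hnx (n + k)%nat (xs (n + k)%nat) (XsW _)))).
      simpl pow in *. lra. }
  assert (Xc2 : forall n m, (n <= m)%nat -> hN (hsub (xs m) (xs n)) <= (/3) ^ n / 2).
  { intros n m Hnm. replace m with (n + (m - n))%nat by lia. pose proof (Xc n (m - n)%nat).
    pose proof (pow_le (/3) (n + (m - n)) ltac:(lra)). lra. }
  assert (Cau : forall eps, 0 < eps -> exists N0, forall m n, (N0 <= m)%nat -> (N0 <= n)%nat ->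
        sqrt (Re (ip (fadd X (xs m) (fopp X (xs n))) (fadd X (xs m) (fopp X (xs n))))) < eps).
  { intros eps Heps. destruct (pow_lt_1_zero (/3)) with (y := eps) as [N0 HN0]; auto.
    rewrite Rabs_pos_eq; lra.
    exists N0. intros m n Hm Hn. change (hN (hsub (xs m) (xs n)) < eps).
    destruct (Compare_dec.le_lt_dec n m).
    - eapply Rle_lt_trans. apply Xc2; auto. specialize (HN0 n Hn). rewrite Rabs_pos_eq in HN0.
      lra. apply pow_le; lra.
    - rewrite (N_sub_sym FA) by auto using W_mem. eapply Rle_lt_trans. apply Xc2; lia.
      specialize (HN0 m Hm). rewrite Rabs_pos_eq in HN0. lra. apply pow_le; lra. }
  destruct (rk_complete _ _ _ _ HR xs (fun n => W_mem _ (XsW n)) Cau) as [l [Hl Hconv]].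
  assert (Wl : W l) by (apply (W_closed xs); auto).
  assert (Xl : forall n, hN (hsub (xs n) l) <= (/3) ^ n / 2).
  { intro n. apply Rnot_lt_le. intro Hlt.
    set (d := hN (hsub (xs n) l) - (/3) ^ n / 2).
    destruct (Hconv d) as [n0 Hn0]. unfold d; lra.
    specialize (Hn0 (max n0 n) (Nat.le_max_l _ _)). change (hN (hsub (xs (max n0 n)) l) < d) in Hn0.
    pose proof (N_sub_tri FA (xs n) (xs (max n0 n)) l (W_mem _ (XsW _)) (W_mem _ (XsW _)) Hl).
    rewrite (N_sub_sym FA (xs n) (xs (max n0 n))) in H by auto using W_mem.
    pose proof (Xc2 n (max n0 n) (Nat.le_max_r _ _)). unfold d in *. lra. }
  set (B := hN (T l)).
  assert (HB0 : 0 <= B) by apply N_ge0.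
  assert (Key : forall n, (/3) ^ (S n) * ms (S n) / 4 <= B).
  { intro n. destruct (HB (S n)) as [[Hh _] [Hh1 [Hm [Hbd _]]]].
    destruct (Hnx n (xs n) (XsW n)) as [_ [_ Hp]]. rewrite <- XsS in Hp.
    set (y := xs (S n)) in *.
    assert (Eq : l = fadd X (fscal X (RtoC 1) y) (fscal X (RtoC (-1)) (hsub y l))) by (vsolve FA (y :: l :: nil)).
    assert (Ep : phi (hs (S n)) l = Cminus (phi (hs (S n)) y) (phi (hs (S n)) (hsub y l))).
    { rewrite Eq at 1. rewrite phi_comb; [apply injective_projections; simpl; ring | auto | apply XsW | apply W_sub; [apply XsW|auto]]. }
    assert (U : Cmod (phi (hs (S n)) l) <= B).
    { eapply Rle_trans. apply phi_bound; auto. change (B * hN (hs (S n)) <= B). pose proof (N_ge0 ip (hs (S n))). nra. }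
    assert (L : Cmod (phi (hs (S n)) y) - Cmod (phi (hs (S n)) (hsub y l)) <= Cmod (phi (hs (S n)) l)).
    { rewrite Ep. pose proof (Cmod_triangle (Cminus (phi (hs (S n)) y) (phi (hs (S n)) (hsub y l))) (phi (hs (S n)) (hsub y l))).
      replace (Cplus (Cminus (phi (hs (S n)) y) (phi (hs (S n)) (hsub y l))) (phi (hs (S n)) (hsub y l))) with (phi (hs (S n)) y) in H by ring.
      lra. }
    pose proof (Hbd (hsub y l) (W_sub _ _ (XsW _) Wl)). pose proof (Xl (S n)).
    pose proof (pow_le 4 (S n) ltac:(lra)). assert (0 <= ms (S n)) by lra.
    assert (ms (S n) * hN (hsub y l) <= ms (S n) * ((/3) ^ (S n) / 2)) by (apply Rmult_le_compat_l; auto).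
    lra. }
  destruct (pow_lt_1_zero (3/4)) with (y := / (4 * B + 1)) as [N0 HN0].
  rewrite Rabs_pos_eq; lra. apply Rinv_0_lt_compat; lra.
  specialize (HN0 (S N0) ltac:(lia)). rewrite Rabs_pos_eq in HN0 by (apply pow_le; lra).
  specialize (Key N0). destruct (HB (S N0)) as [_ [_ [Hm _]]].
  assert (E1 : (/3) ^ (S N0) * 4 ^ (S N0) * (3/4) ^ (S N0) = 1).
  { rewrite <- !Rpow_mult_distr. replace (/ 3 * 4 * (3 / 4)) with 1 by field. apply pow1. }
  pose proof (pow_lt (/3) (S N0) ltac:(lra)). pose proof (pow_lt (3/4) (S N0) ltac:(lra)).
  assert (4 ^ (S N0) * (/3) ^ (S N0) <= 4 * B) by nra.
  assert (1 <= 4 * B * (3/4) ^ (S N0)) by nra.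
  assert (4 * B * (3/4) ^ (S N0) <= 4 * B * / (4 * B + 1)) by nra.
  assert (4 * B * / (4 * B + 1) < 1).
  { apply Rmult_lt_reg_r with (4 * B + 1). lra. rewrite Rmult_assoc, Rinv_l; lra. }
  lra.
Qed.

Lemma phi_comb_r h1 h2 a b f : mem h1 -> mem h2 -> W f ->
  phi (fadd X (fscal X a h1) (fscal X b h2)) f = Cplus (Cmult (Cconj a) (phi h1 f)) (Cmult (Cconj b) (phi h2 f)).
Proof. intros. unfold phi. rewrite (ipDr FA), !(ipZr FA); auto; try apply (ax_Psc FA); auto. Qed.

Lemma Sb_comb a b h1 h2 : Sb h1 -> Sb h2 -> Sb (fadd X (fscal X a h1) (fscal X b h2)).
Proof.
  intros [H1 [c1 Hc1]] [H2 [c2 Hc2]]. split.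
  apply (ax_Padd FA); apply (ax_Psc FA); auto.
  exists (Cmod a * c1 + Cmod b * c2). intros f Wf. rewrite phi_comb_r; auto.
  eapply Rle_trans. apply Cmod_triangle. rewrite !Cmod_mult, !Cmod_conj.
  pose proof (Hc1 f Wf). pose proof (Hc2 f Wf). pose proof (Cmod_ge_0 a). pose proof (Cmod_ge_0 b).
  pose proof (Cmod_ge_0 (phi h1 f)). pose proof (Cmod_ge_0 (phi h2 f)). nra.
Qed.

Lemma Sb_zero : Sb (fzero X).
Proof. split. apply (ax_P0 FA). exists 0. intros. rewrite phi_h0; auto. rewrite Cmod_0. lra. Qed.

Lemma Sb_kernel gam u : gam <> beta -> Sb (fun z => K gam z u).
Proof.
  intros Hg. assert (Hk : mem (fun z => K gam z u)) by apply (rk_K_mem _ _ _ _ HR).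
  split; auto. exists (Cmod (Cinv (Cminus gam beta)) * hN (fun z => K gam z u)). intros f Wf.
  unfold phi. rewrite (rk_reproducing _ _ _ _ HR) by auto. rewrite (Rsh_ne X) by auto.
  rewrite hs_innerZl. rewrite <- (rk_reproducing _ _ _ _ HR) by (apply W_mem; auto).
  rewrite Cmod_mult. pose proof (CS FA f (fun z => K gam z u) (W_mem _ Wf) Hk).
  pose proof (Cmod_ge_0 (Cinv (Cminus gam beta))). nra.
Qed.

Lemma Sb_closed (M : R) : 0 <= M -> (forall h, Sb h -> forall f, W f -> Cmod (phi h f) <= M * hN f * hN h) ->
  forall u l, (forall n, Sb (u n)) -> mem l -> conv u l -> Sb l.
Proof.
  intros HM0 HM u l Hu Hl Hc. split; auto. exists (M * hN l). intros f Wf.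
  apply Rnot_lt_le. intro Hlt.
  set (gap := Cmod (phi l f) - M * hN l * hN f).
  set (A := M * hN f + hN (T f) + 1).
  pose proof (N_ge0 ip f). pose proof (N_ge0 ip (T f)).
  destruct (Hc (gap / A)) as [n0 Hn0]. apply Rdiv_lt_0_compat; unfold gap, A; nra.
  specialize (Hn0 n0 (le_n _)).
  assert (Mu : mem (u n0)) by (apply (Hu n0)).
  assert (E : phi l f = Cminus (phi (u n0) f) (phi (hsub (u n0) l) f)).
  { replace (hsub (u n0) l) with (fadd X (fscal X (RtoC 1) (u n0)) (fscal X (RtoC (-1)) l)) by (vsolve FA (u n0 :: l :: nil)).
    rewrite phi_comb_r; auto. apply injective_projections; simpl; ring. }
  pose proof (Cmod_sub_le (phi (u n0) f) (phi (hsub (u n0) l) f)). rewrite <- E in H1.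
  pose proof (HM (u n0) (Hu n0) f Wf).
  pose proof (phi_bound (hsub (u n0) l) f (Psub FA _ _ Mu Hl) Wf).
  pose proof (N_sub_tri FA (u n0) l (fzero X) Mu Hl (ax_P0 FA)). rewrite !(sub_z0 FA) in H4.
  pose proof (N_ge0 ip (hsub (u n0) l)).
  assert (Hd : hN (hsub (u n0) l) * A < gap).
  { apply Rmult_lt_reg_r with (/ A). apply Rinv_0_lt_compat; unfold A; nra.
    rewrite Rmult_assoc, Rinv_r by (unfold A; nra). unfold Rdiv in Hn0. lra. }
  assert (M * hN f * hN (u n0) <= M * hN f * (hN (hsub (u n0) l) + hN l)) by (apply Rmult_le_compat_l; [nra|lra]).
  unfold gap, A in *. nra.
Qed.

Lemma w_zero w : mem w -> (forall gam u, gam <> beta -> ip w (fun z => K gam z u) = RtoC 0) -> w = fzero X.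
Proof.
  intros Hw Ho.
  assert (Hne : forall gam, gam <> beta -> w gam = hs_zero).
  { intros gam Hg. apply hs_inner_eq0. rewrite <- (rk_reproducing _ _ _ _ HR); auto. }
  apply functional_extensionality; intro z. unfold fzero.
  destruct (Ceq_dec z beta) as [E|E]; [|auto]. subst.
  apply (xN_small X). intros eps Heps.
  destruct (cont_mem X mem ip K HR w beta Hw eps Heps) as [d [Hd G]].
  specialize (G (RtoC (d / 2))). rewrite Cmod_RtoC_pos in G by lra.
  rewrite Hne in G. unfold sub in G. rewrite (add0l XA) in G. rewrite (N_opp XA) in G; auto. apply G; lra.
  intro E. apply (f_equal fst) in E. simpl in E. lra.
Qed.

Lemma all_Sb (M : R) : 0 <= M -> (forall h, Sb h -> forall f, W f -> Cmod (phi h f) <= M * hN f * hN h) ->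
  forall g, mem g -> Sb g.
Proof.
  intros HM0 HM g Hg.
  set (E := fun r => exists s, Sb s /\ r = - Q ip (hsub g s)).
  assert (Hb : bound E).
  { exists 0. intros r [s [Ss Er]]. subst. pose proof (Q_ge0 FA (hsub g s) (Psub FA _ _ Hg (proj1 Ss))). lra. }
  assert (Hne : exists r, E r) by (exists (- Q ip (hsub g (fzero X))); exists (fzero X); split; auto using Sb_zero).
  destruct (completeness E Hb Hne) as [m0 [Hub Hlub]].
  set (d2 := - m0).
  assert (Hi : forall s, Sb s -> d2 <= Q ip (hsub g s)).
  { intros s Ss. assert (E (- Q ip (hsub g s))) by (exists s; auto). apply Hub in H. unfold d2. lra. }
  assert (Hii : forall eps, 0 < eps -> exists s, Sb s /\ Q ip (hsub g s) < d2 + eps).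
  { intros eps Heps. apply NNPP; intro Hn.
    assert (m0 <= m0 - eps). { apply Hlub. intros r [s [Ss Er]]. subst. apply Rnot_lt_le. intro. apply Hn.
      exists s. split; auto. unfold d2. lra. }
    lra. }
  assert (Hd0 : 0 <= d2).
  { pose proof (Hi _ Sb_zero). destruct (Hii 1 ltac:(lra)) as [s [Ss Hs]].
    apply Rnot_lt_le. intro. 
    destruct (Hii (- d2)) as [s' [Ss' Hs']]. lra.
    pose proof (Q_ge0 FA (hsub g s') (Psub FA _ _ Hg (proj1 Ss'))). lra. }
  assert (Ch : forall n : nat, exists s, Sb s /\ Q ip (hsub g s) < d2 + (/3) ^ n).
  { intro n. apply Hii. apply pow_lt; lra. }
  pose (ss := fun n => proj1_sig (constructive_indefinite_description _ (Ch n))).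
  assert (Hss : forall n, Sb (ss n) /\ Q ip (hsub g (ss n)) < d2 + (/3) ^ n).
  { intro n. unfold ss. destruct (constructive_indefinite_description _ (Ch n)) as [s Hs]. exact Hs. }
  assert (Par : forall n k, Q ip (hsub (ss k) (ss n)) <= 2 * (/3) ^ n + 2 * (/3) ^ k).
  { intros n k. destruct (Hss n) as [Sn Qn]. destruct (Hss k) as [Sk Qk].
    set (a := hsub g (ss n)) in *. set (b := hsub g (ss k)) in *.
    set (mid := fadd X (fscal X (Cinv (RtoC 2)) (ss n)) (fscal X (Cinv (RtoC 2)) (ss k))).
    assert (Smid : Sb mid) by (apply Sb_comb; auto).
    assert (E1 : hsub (ss k) (ss n) = hsub a b) by (unfold a, b; vsolve FA (g :: ss n :: ss k :: nil)).
    assert (E2 : fadd X a b = fscal X (RtoC 2) (hsub g mid)).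
    { unfold a, b, mid. vsolve FA (g :: ss n :: ss k :: nil); field; intro HE; inversion HE; lra. }
    pose proof (parallelogram FA a b (Psub FA _ _ Hg (proj1 Sn)) (Psub FA _ _ Hg (proj1 Sk))).
    rewrite E2, (Q_sc FA) in H by (apply (Psub FA); auto; apply (proj1 Smid)).
    simpl in H. rewrite E1. pose proof (Hi mid Smid). nra. }
  assert (Cau : forall eps, 0 < eps -> exists N0, forall m n, (N0 <= m)%nat -> (N0 <= n)%nat ->
        sqrt (Re (ip (fadd X (ss m) (fopp X (ss n))) (fadd X (ss m) (fopp X (ss n))))) < eps).
  { intros eps Heps. destruct (pow_lt_1_zero (/3)) with (y := eps * eps / 4) as [N0 HN0].
    rewrite Rabs_pos_eq; lra. apply Rdiv_lt_0_compat; nra.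
    exists N0. intros m n Hm Hn. change (hN (hsub (ss m) (ss n)) < eps).
    specialize (Par n m). pose proof (HN0 m Hm). pose proof (HN0 n Hn).
    rewrite Rabs_pos_eq in * by (apply pow_le; lra).
    unfold Nm. rewrite <- (sqrt_Rsqr eps) by lra. apply sqrt_lt_1_alt. split.
    apply (Q_ge0 FA). apply (Psub FA); apply (proj1 (proj1 (Hss _))). unfold Rsqr. lra. }
  destruct (rk_complete _ _ _ _ HR ss (fun n => proj1 (proj1 (Hss n))) Cau) as [s [Hs Hconv]].
  assert (Ss : Sb s) by (apply (Sb_closed M HM0 HM ss); auto; intro n; apply Hss).
  set (w := hsub g s).
  assert (Hw : mem w) by (apply (Psub FA); auto).
  assert (Qw : Q ip w <= d2).
  { apply Rnot_lt_le. intro Hlt.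
    assert (Hlt' : sqrt d2 < hN w).
    { unfold Nm. apply sqrt_lt_1_alt. split; auto. }
    set (gap := hN w - sqrt d2).
    destruct (Hconv (gap / 2)) as [n0 Hn0]. unfold gap; lra.
    destruct (pow_lt_1_zero (/3)) with (y := (gap / 2) * (gap / 2)) as [n1 Hn1].
    rewrite Rabs_pos_eq; lra. unfold gap; nra.
    set (n := max n0 n1). specialize (Hn0 n (Nat.le_max_l _ _)). specialize (Hn1 n (Nat.le_max_r _ _)).
    rewrite Rabs_pos_eq in Hn1 by (apply pow_le; lra).
    destruct (Hss n) as [Sn Qn].
    pose proof (N_sub_tri FA g (ss n) s Hg (proj1 Sn) Hs). fold w in H.
    assert (hN (hsub g (ss n)) < sqrt d2 + gap / 2).
    { unfold Nm. eapply Rle_lt_trans. apply sqrt_le_1_alt. left. apply Qn.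
      eapply Rle_lt_trans. apply sqrt_plus_sqrt_le. auto. apply pow_le; lra.
      apply Rplus_lt_compat_l. rewrite <- (sqrt_Rsqr (gap / 2)) by (unfold gap; lra).
      apply sqrt_lt_1_alt. split. apply pow_le; lra. unfold Rsqr; lra. }
    change (hN (hsub (ss n) s) < gap / 2) in Hn0. unfold gap in *. lra. }
  assert (Orth : forall k, Sb k -> ip w k = RtoC 0).
  { intros k Sk. set (c := ip w k).
    set (t := / (Q ip k + 1)).
    assert (Qk0 : 0 <= Q ip k) by (apply (Q_ge0 FA); apply Sk).
    assert (Ht : 0 < t) by (apply Rinv_0_lt_compat; lra).
    set (a := Cmult (RtoC (- t)) c).
    assert (Eq : fadd X w (fscal X a k) = hsub g (fadd X (fscal X (RtoC 1) s) (fscal X (Copp a) k))).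
    { unfold w. vsolve FA (g :: s :: k :: nil). }
    pose proof (Hi _ (Sb_comb (RtoC 1) (Copp a) s k Ss Sk)). rewrite <- Eq in H.
    rewrite (Q_expand FA) in H by (auto; apply Sk). fold c in H.
    assert (Htq : t * Q ip k < 1).
    { unfold t. apply Rmult_lt_reg_r with (Q ip k + 1). lra.
      replace (/ (Q ip k + 1) * Q ip k * (Q ip k + 1)) with (Q ip k) by (field; lra). lra. }
    unfold a in H. simpl in H.
    assert (Hc : fst c ^ 2 + snd c ^ 2 = 0).
    { assert (Hm : 0 <= fst c ^ 2 + snd c ^ 2) by nra.
      assert (t * (fst c ^ 2 + snd c ^ 2) * (2 - t * Q ip k) <= 0) by nra.
      assert (0 < 2 - t * Q ip k) by lra.
      destruct (Rle_lt_dec (fst c ^ 2 + snd c ^ 2) 0); [lra|].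
      assert (0 < t * (fst c ^ 2 + snd c ^ 2)) by (apply Rmult_lt_0_compat; lra).
      assert (0 < t * (fst c ^ 2 + snd c ^ 2) * (2 - t * Q ip k)) by (apply Rmult_lt_0_compat; lra). lra. }
    apply injective_projections; simpl; nra. }
  assert (Wz : w = fzero X).
  { apply w_zero; auto. intros gam u Hgam. apply Orth. apply Sb_kernel; auto. }
  assert (g = s) by (apply (sub_eq FA); exact Wz).
  subst; auto.
Qed.

Lemma R_bounded : exists M, 0 <= M /\ forall f, W f -> hN (T f) <= M * hN f.
Proof.
  destruct ubp as [M [HM0 HM]]. exists M. split; auto. intros f Wf.
  assert (Hm : mem (T f)) by auto.
  pose proof (HM (T f) (all_Sb M HM0 HM (T f) Hm) f Wf) as B.
  unfold phi in B. pose proof (Re_le_Cmod (ip (T f) (T f))).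
  change (Re (ip (T f) (T f))) with (Q ip (T f)) in H. rewrite <- (N_sq FA) in H by auto.
  pose proof (N_ge0 ip (T f)). pose proof (N_ge0 ip f).
  destruct (Req_dec (hN (T f)) 0) as [Z|Z]. rewrite Z. nra.
  apply Rmult_le_reg_r with (hN (T f)). lra. nra.
Qed.

End BD.

Theorem lemma2 (X : CHilbert) (mem : (C -> X) -> Prop)
  (ip : (C -> X) -> (C -> X) -> C) (K : C -> C -> X -> X) :
  is_RKHS X mem ip K ->
  (exists f, mem f /\ f <> fzero X) ->
  forall beta : C,
    ((forall f, Hsub X mem beta f -> mem (Rshift X beta f)) <->
     (forall g, (exists f, Hsub X mem beta f /\ Rshift X beta f = g) <-> Dom X mem g))
    /\
    ((forall f, Hsub X mem beta f -> mem (Rshift X beta f)) ->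
       Rshift_bounded_linear X mem ip beta
       /\ (forall g, (exists f, Dom X mem f /\ Tshift X beta f = g) <-> Hsub X mem beta g)
       /\ regular_type X mem ip beta).
Proof.
  intros HR _ beta.
  assert (DomR : (forall f, Hsub X mem beta f -> mem (Rshift X beta f)) ->
                 forall f, Hsub X mem beta f -> Dom X mem (Rshift X beta f)).
  { intros HRc f Hf. split. auto. change (mem (Tmul X (Rshift X beta f))).
    rewrite (Tmul_dec X _ beta). rewrite (Tsh_Rsh X f beta (proj2 Hf)).
    apply (rk_add _ _ _ _ HR). apply Hf. apply (rk_scal _ _ _ _ HR). auto. }
  assert (DomT : forall g, Dom X mem g -> Hsub X mem beta (Tshift X beta g)).
  { intros g Hg. split. apply (Tsh_mem X mem ip K HR); auto. apply Tsh_at. }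
  split.
  - split.
    + intros HRc g. split.
      * intros [f [Hf E]]. subst. apply DomR; auto.
      * intros Hg. exists (Tshift X beta g). split. apply DomT; auto.
        apply (Rsh_Tsh X mem ip K HR). apply Hg.
    + intros Heq f Hf. apply Heq. exists f. auto.
  - intros HRc. split; [|split].
    + split; [auto|split].
      * intros a b f g Hf Hg. apply (Rsh_lin X mem ip K HR); [apply Hf|apply Hg].
      * exact (R_bounded X mem ip K HR beta HRc).
    + intros g. split.
      * intros [f [Hf E]]. subst. apply DomT; auto.
      * intros Hg. exists (Rshift X beta g). split. apply DomR; auto.
        apply Tsh_Rsh. apply Hg.
    + destruct (R_bounded X mem ip K HR beta HRc) as [M [HM0 HM]].
      exists (/ (M + 1)). split. apply Rinv_0_lt_compat; lra.
      intros f Hf. pose proof (HM _ (DomT f Hf)) as B.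
      rewrite (Rsh_Tsh X mem ip K HR) in B by apply Hf.
      change (Nm ip (Tshift X beta f) >= / (M + 1) * Nm ip f).
      pose proof (N_ge0 ip (Tshift X beta f)).
      apply Rle_ge. apply Rmult_le_reg_l with (M + 1). lra.
      rewrite <- Rmult_assoc, Rinv_r, Rmult_1_l by lra. nra.
Qed.
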